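(* Let $H=\sum_{\mathbf{j}\in V}h_{\mathbf{j}}$ be a Hamiltonian with frustration graph $G$, let $K_s$ be a simplicial clique in $G$, and for $\mathbf{j}\in K_s$ let $K_{\mathbf{j}}=\Gamma[\mathbf{j}]\setminus(K_s\setminus\{\mathbf{j}\})$, so that $\Gamma[\mathbf{j}]=K_s\cup K_{\mathbf{j}}$. Then for every integer $k\ge1$, \[ Q^{(k)}_G=Q^{(k)}_{G\setminus K_s}+\sum_{\mathbf{j}\in K_s}Q^{(k-1)}_{G\setminus K_{\mathbf{j}}}\,h_{\mathbf{j}} . \]
   Context: Setting: $V$ a finite set of distinct $n$-qubit Pauli strings, $H=\sum_{\mathbf{j}\in V}h_{\mathbf{j}}$ with $h_{\mathbf{j}}=b_{\mathbf{j}}\sigma^{\mathbf{j}}$, $b_{\mathbf{j}}\in\mathbb{R}\setminus\{0\}$; frustration graph $G$: edge iff terms anticommute. $\Gamma[\mathbf{j}]$ is the closed neighbourhood of $\mathbf{j}$. Simplicial clique: clique $K_s$ with $\Gamma(\mathbf{j})\setminus K_s$ a clique for every $\mathbf{j}\in K_s$. For an induced subgraph $G'$ of $G$ and $k\ge0$, the independent set charge is $Q^{(k)}_{G'}=\sum_{S}h_S$, summed over independent sets $S$ of $G'$ of size $k$, where $h_S=\prod_{\mathbf{j}\in S}h_{\mathbf{j}}$ (so $Q^{(0)}_{G'}=I$, and $Q^{(k)}_{G'}=0$ if $G'$ has no independent set of size $k$). $G\setminus U$ denotes the subgraph induced by $V\setminus U$. *)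

(* Defs.v *)
From HB Require Import structures.
From mathcomp Require Import all_boot all_order all_algebra.
From mathcomp Require Import reals.
From mathcomp Require Import complex.
Set Implicit Arguments. Unset Strict Implicit. Unset Printing Implicit Defensive.
Import Order.TTheory GRing.Theory Num.Theory.
Local Open Scope ring_scope.

(* An n-qubit Pauli string: each qubit carries 0 = I, 1 = X, 2 = Y, 3 = Z. *)
Definition pauli_string (n : nat) := {ffun 'I_n -> 'I_4}.

Section Pauli.
Variable R : realType.
Local Notation C := (complex R).

(* Single-qubit Pauli matrices, entry (x, y) with x, y in {0,1} (false = |0>). *)
Definition pauli1 (p : 'I_4) (x y : bool) : C :=
  match val p with
  | 0 => if x == y then 1 else 0
  | 1 => if x == y then 0 else 1
  | 2 => if x == y then 0 else if y then - 'i%C else 'i%C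
  | _ => if x == y then (if x then -1 else 1) else 0
  end.

Definition qbit (n : nat) (a : 'I_(2 ^ n)) (i : 'I_n) : bool := odd (a %/ 2 ^ i).

(* sigma^j = tensor product of the single-qubit Paulis, as a 2^n x 2^n matrix. *)
Definition sigma (n : nat) (s : pauli_string n) : 'M[C]_(2 ^ n) :=
  \matrix_(a, b) \prod_(i < n) pauli1 (s i) (qbit a i) (qbit b i).

Variable n : nat.
Variable b : pauli_string n -> R.

Definition hterm (j : pauli_string n) : 'M[C]_(2 ^ n) := (b j)%:C%C *: sigma j.

Definition frust (j k : pauli_string n) : bool :=
  (j != k) && (hterm j *m hterm k == - (hterm k *m hterm j)).

Definition nbhd (V : {set pauli_string n}) j := [set k in V | frust j k].
Definition cnbhd (V : {set pauli_string n}) j := j |: nbhd V j.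

Definition is_clique (K : {set pauli_string n}) : bool :=
  [forall j in K, forall k in K, (j != k) ==> frust j k].

Definition is_indep (S : {set pauli_string n}) : bool :=
  [forall j in S, forall k in S, ~~ frust j k].

Definition simplicial_clique (V Ks : {set pauli_string n}) : bool :=
  [&& Ks \subset V, is_clique Ks &
      [forall j in Ks, is_clique (nbhd V j :\: Ks)]].

(* h_S = product of the h_j, j in S (matrix product, in enumeration order;
   the factors pairwise commute when S is independent). *)
Definition hprod (S : {set pauli_string n}) : 'M[C]_(2 ^ n) :=
  \big[mulmx/1%:M]_(j in S) hterm j.

Definition Qcharge (W : {set pauli_string n}) (k : nat) : 'M[C]_(2 ^ n) :=
  \sum_(S : {set pauli_string n} | [&& S \subset W, is_indep S & #|S| == k])
     hprod S.

End Pauli.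

(* Main.v *)
Require Import Defs.
From HB Require Import structures.
From mathcomp Require Import all_boot all_order all_algebra.
From mathcomp Require Import reals.
From mathcomp Require Import complex.
From mathcomp Require Import ring.
Import Order.TTheory GRing.Theory Num.Theory.
Local Open Scope ring_scope.
Set Implicit Arguments. Unset Strict Implicit.

Section PauliAlg.
Variable R : realType.
Local Notation C := (complex R).

Definition eps1 (p q : 'I_4) : C :=
  if (val p == 0)%N || (val q == 0)%N || (p == q) then 1 else -1.

Lemma pauli1_comm (p q : 'I_4) (a c : bool) :
  \sum_(x : bool) pauli1 R p a x * pauli1 R q x c =
  eps1 p q * \sum_(x : bool) pauli1 R q a x * pauli1 R p x c.
Proof.
rewrite !big_bool /eps1.
case: p => [[|[|[|[|p]]]] Hp] //; case: q => [[|[|[|[|q]]]] Hq] //=;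
  case: a; case: c; rewrite /pauli1 /= ; ring.
Qed.


Lemma bits_inj (n a a' : nat) : (a < 2 ^ n)%N -> (a' < 2 ^ n)%N ->
  (forall i, (i < n)%N -> odd (a %/ 2 ^ i) = odd (a' %/ 2 ^ i)) -> a = a'.
Proof.
elim: n a a' => [|n IH] a a'.
  by rewrite expn0 !ltnS !leqn0 => /eqP-> /eqP->.
move=> ha ha' H.
have h2 : forall x, (x < 2 ^ n.+1)%N -> (x %/ 2 < 2 ^ n)%N.
  by move=> x hx; rewrite ltn_divLR // -expnSr.
have e : (a %/ 2 = a' %/ 2)%N.
  apply: IH; [exact: h2|exact: h2|] => i hi.
  by rewrite -!divnMA -expnS; apply: H.
rewrite (div.divn_eq a 2) (div.divn_eq a' 2) e !modn2.
by have := H 0%N isT; rewrite expn0 !divn1 => ->.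
Qed.

Definition bitsf (n : nat) (a : 'I_(2 ^ n)) : {ffun 'I_n -> bool} :=
  [ffun i => qbit a i].

Lemma bitsf_bij n : bijective (@bitsf n).
Proof.
apply: inj_card_bij.
  move=> a a' /ffunP H; apply: val_inj; apply: (bits_inj (ltn_ord a) (ltn_ord a')).
  by move=> i hi; have := H (Ordinal hi); rewrite !ffunE.
by rewrite card_ffun card_bool !card_ord.
Qed.

Lemma tensor_mul n (F G : 'I_n -> bool -> bool -> C) :
  (\matrix_(a, c) \prod_(i < n) F i (qbit a i) (qbit c i) : 'M[C]_(2 ^ n)) *m
  (\matrix_(a, c) \prod_(i < n) G i (qbit a i) (qbit c i)) =
  \matrix_(a, c) \prod_(i < n) \sum_(x : bool) F i (qbit a i) x * G i x (qbit c i).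
Proof.
apply/matrixP => a c; rewrite !mxE.
rewrite bigA_distr_bigA /=.
rewrite (reindex (@bitsf n)) /=; last first.
  by case: (bitsf_bij n) => g h1 h2; exists g => x _; [apply: h1|apply: h2].
apply: eq_bigr => y _; rewrite !mxE -big_split /=.
by apply: eq_bigr => i _; rewrite ffunE.
Qed.

Definition epsn n (s t : pauli_string n) : C := \prod_(i < n) eps1 (s i) (t i).

Lemma epsn_pm n (s t : pauli_string n) : epsn s t = 1 \/ epsn s t = -1.
Proof.
rewrite /epsn; apply: (big_ind (fun x : C => x = 1 \/ x = -1)); first by left.
  by move=> x y [->|->] [->|->]; rewrite ?mulr1 ?mul1r ?mulrNN ?mulr1; auto.
by move=> i _; rewrite /eps1; case: ifP; auto.
Qed.

Lemma sigma_comm n (s t : pauli_string n) :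
  sigma R s *m sigma R t = epsn s t *: (sigma R t *m sigma R s).
Proof.
rewrite /sigma (tensor_mul (fun i => pauli1 R (s i)) (fun i => pauli1 R (t i))) (tensor_mul (fun i => pauli1 R (t i)) (fun i => pauli1 R (s i))); apply/matrixP => a c; rewrite !mxE /epsn -big_split /=.
by apply: eq_bigr => i _; rewrite pauli1_comm.
Qed.

End PauliAlg.

Section Gen.
Variable K : pzRingType.
Variable m : nat.
Variable T : eqType.
Implicit Types (F : T -> 'M[K]_m).

Lemma big_comm F (A : 'M[K]_m) s (P : pred T) :
  (forall y, y \in s -> P y -> F y *m A = A *m F y) ->
  \big[mulmx/1%:M]_(y <- s | P y) F y *m A = A *m \big[mulmx/1%:M]_(y <- s | P y) F y.
Proof.
elim: s => [|y s IH] H; first by rewrite big_nil mul1mx mulmx1.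
rewrite big_cons; case Py: (P y); last by apply: IH => z hz; apply: H; rewrite inE hz orbT.
rewrite -mulmxA IH; last by move=> z hz; apply: H; rewrite inE hz orbT.
by rewrite !mulmxA H // inE eqxx.
Qed.

Lemma big_pull F x s (P : pred T) : uniq s -> x \in s -> P x ->
  (forall y, y \in s -> P y -> F y *m F x = F x *m F y) ->
  \big[mulmx/1%:M]_(y <- s | P y) F y =
  \big[mulmx/1%:M]_(y <- s | P y && (y != x)) F y *m F x.
Proof.
elim: s => [|y s IH] //= /andP[ys us] xs Px H.
rewrite !big_cons; case: eqVneq => [exy|nxy].
  subst y; rewrite Px andbF /= -big_comm; last by move=> z hz; apply: H; rewrite inE hz orbT.
  congr (_ *m _); rewrite (big_seq_cond P) (big_seq_cond (fun z => P z && (z != x))); apply: eq_bigl => z.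
  case: (boolP (z \in s)) => //= zs; have -> : z != x by apply: contraNneq ys => <-.
  by rewrite andbT.
rewrite inE eq_sym (negbTE nxy) /= in xs.
rewrite andbT; case: (P y); rewrite IH //; try by move=> z hz; apply: H; rewrite inE hz orbT.
by rewrite mulmxA.
Qed.
End Gen.

Lemma eq_oppC (V : zmodType) (x y : V) : (x == - y) = (y == - x).
Proof. by apply/eqP/eqP => ->; rewrite opprK. Qed.

Section Main.
Variable R : realType.
Variable n : nat.
Variable b : pauli_string n -> R.
Local Notation PS := (pauli_string n).
Local Notation h := (hterm b).
Local Notation fr := (frust b).

Lemma hterm_comm_or (j k : PS) :
  h j *m h k = h k *m h j \/ h j *m h k = - (h k *m h j).
Proof.
rewrite /hterm -!scalemxAl -!scalemxAr !scalerA (mulrC (b k)%:C%C) sigma_comm.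
by case: (epsn_pm R j k) => ->; rewrite ?scale1r ?scaleN1r ?scalerN; auto.
Qed.

Lemma frustC (j k : PS) : fr j k = fr k j.
Proof.
rewrite /frust. rewrite [k == j]eq_sym. rewrite (@eq_oppC 'M[complex R]_(2 ^ n) (h j *m h k)).
by [].
Qed.

Lemma frust_irr (j : PS) : fr j j = false.
Proof. by rewrite /frust (eqxx j). Qed.

Lemma indep_comm (j k : PS) : ~~ fr j k -> h j *m h k = h k *m h j.
Proof.
rewrite /frust; case: eqVneq => [->//|_ /=].
by case: (hterm_comm_or j k) => -> //; rewrite eqxx.
Qed.

Lemma is_indepP (S : {set PS}) :
  reflect (forall x y, x \in S -> y \in S -> ~~ fr x y) (is_indep b S).
Proof.
apply: (iffP forallP) => [H x y xS yS|H x].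
  by have /forall_inP := implyP (H x) xS; apply.
by apply/implyP => xS; apply/forall_inP => y yS; apply: H.
Qed.

Lemma is_cliqueP (S : {set PS}) :
  reflect (forall x y, x \in S -> y \in S -> x != y -> fr x y) (is_clique b S).
Proof.
apply: (iffP forallP) => [H x y xS yS|H x].
  by have /forall_inP := implyP (H x) xS; move=> /(_ y yS) /implyP.
by apply/implyP => xS; apply/forall_inP => y yS; apply/implyP; apply: H.
Qed.

Lemma hprodU1 (j : PS) (T : {set PS}) : j \notin T -> is_indep b (j |: T) ->
  hprod b (j |: T) = hprod b T *m h j.
Proof.
move=> jT /is_indepP ind.
rewrite /hprod. rewrite (big_pull (x:=j) (index_enum_uniq _)).
- congr (_ *m _); apply: eq_bigl => z; rewrite in_setU1.
  by case: eqVneq => [->|]; rewrite ?(negbTE jT) ?andbT.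
- exact: mem_index_enum.
- exact: setU11.
move=> y _ yS; apply: indep_comm; apply: ind => //; exact: setU11.
Qed.

Lemma reindex1 (j : PS) (P : pred {set PS}) (F : {set PS} -> 'M[complex R]_(2 ^ n)) :
  \sum_(S | P S && (j \in S)) F S = \sum_(T | P (j |: T) && (j \notin T)) F (j |: T).
Proof.
rewrite (reindex_onto (fun T => j |: T) (fun S => S :\ j)) /=; last first.
  by move=> S /andP[_ jS]; rewrite setD1K.
apply: eq_bigl => T; rewrite setU11 andbT.
case: (boolP (j \in T)) => jT /=.
  rewrite andbF; apply/negbTE; apply/negP => /andP[_ /eqP e].
  by move: jT; rewrite -e setD11.
by rewrite setU1K // eqxx andbT.
Qed.


Lemma frust_anti (j k : PS) : fr j k -> h j *m h k = - (h k *m h j).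
Proof. by move=> /andP[_ /eqP]. Qed.

Lemma disjP (A B : {set PS}) :
  reflect (forall x, x \in A -> x \notin B) [disjoint A & B].
Proof.
rewrite disjoint_subset; apply: (iffP subsetP) => H x /H; by rewrite inE.
Qed.

Lemma indep_sub (A B : {set PS}) : A \subset B -> is_indep b B -> is_indep b A.
Proof.
move=> /subsetP sAB /is_indepP H; apply/is_indepP => x y /sAB xB /sAB yB.
exact: H.
Qed.

Lemma indepU1 (x : PS) (U : {set PS}) : is_indep b U ->
  (forall y, y \in U -> ~~ fr x y) -> is_indep b (x |: U).
Proof.
move=> /is_indepP iU H; apply/is_indepP => y z; rewrite !in_setU1.
case/orP=> [/eqP->|yU]; case/orP=> [/eqP->|zU].
- by rewrite frust_irr.
- exact: H.
- by rewrite frustC; apply: H.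
- exact: iU.
Qed.

Lemma in_cnbhd (V : {set PS}) j y :
  (y \in cnbhd b V j) = (y == j) || (y \in V) && fr j y.
Proof. by rewrite /cnbhd /nbhd in_setU1 inE. Qed.

Definition IS (W : {set PS}) (k : nat) (S : {set PS}) :=
  [&& S \subset W, is_indep b S & #|S| == k].

Lemma split_clique (Ks W : {set PS}) (k : nat) (F : {set PS} -> 'M[complex R]_(2 ^ n)) :
  is_clique b Ks ->
  \sum_(S | IS W k S && ~~ [disjoint S & Ks]) F S =
  \sum_(j in Ks) \sum_(S | IS W k S && (j \in S)) F S.
Proof.
move=> /is_cliqueP cl.
rewrite (eq_bigr (fun j => \sum_(S | IS W k S) (if j \in S then F S else 0))); last first.
  move=> j _. rewrite (big_mkcondr _ _ (IS W k) (fun S => j \in S)). by [].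
rewrite exchange_big big_mkcondr /=.
apply: eq_bigr => S /and3P[_ /is_indepP iS _].
rewrite -big_mkcondr /=.
rewrite (eq_bigl (fun j => j \in Ks :&: S)); last by move=> j; rewrite in_setI.
rewrite sumr_const -setI_eq0 -cards_eq0 setIC.
have : (#|Ks :&: S| <= 1)%N.
  apply/card_le1_eqP => x y; rewrite !in_setI => /andP[xK xS] /andP[yK yS].
  apply/eqP; apply: contraT => nxy.
  by have := iS _ _ yS xS; rewrite (cl _ _ yK xK nxy).
by case: #|_| => [|[|]] //=; rewrite ?mulr0n ?mulr1n.
Qed.


Section Thm.
Variables (V Ks : {set PS}).
Hypotheses (hKsV : Ks \subset V) (hcl : is_clique b Ks).

Definition Wj j := V :\: (cnbhd b V j :\: (Ks :\ j)).

Lemma condA (k : nat) (hk : (1 <= k)%N) j (jK : j \in Ks) T :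
  (IS V k (j |: T) && (j \notin T)) = (IS (Wj j) k.-1 T && [disjoint T & Ks]).
Proof.
have jV : j \in V := subsetP hKsV j jK.
apply/idP/idP.
- case/andP => /and3P[sV iU cU] jT.
  have iT : is_indep b T := indep_sub (subsetUr _ _) iU.
  have nf : forall y, y \in T -> ~~ fr j y.
    by move=> y yT; apply: (elimT (is_indepP _) iU); rewrite ?setU11 ?setU1r.
  apply/andP; split; first (apply/and3P; split => //).
  + apply/subsetP => y yT.
    have yj : y != j by apply: contraNneq jT => <-.
    rewrite /Wj !in_setD in_set1 (subsetP sV y (setU1r _ yT)) andbT in_cnbhd.
    by rewrite (negbTE yj) (negbTE (nf y yT)) /= !andbF.
  + by rewrite cardsU1 jT add1n in cU; rewrite -(eqP cU).
  + apply/disjP => y yT; apply: contraNN (nf y yT) => yK.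
    apply: (elimT (is_cliqueP _) hcl) => //.
    by apply: contraNneq jT => ->.
- case/andP => /and3P[sT iT cT] dT.
  have jT : j \notin T.
    by apply/negP => /(elimT (disjP T Ks) dT); rewrite jK.
  rewrite jT andbT; apply/and3P; split.
  + apply/subsetP => y; rewrite in_setU1 => /orP[/eqP->//|yT].
    by have := subsetP sT y yT; rewrite /Wj in_setD => /andP[_ ->].
  + apply: indepU1 => // y yT.
    have yK : y \notin Ks := elimT (disjP T Ks) dT y yT.
    have := subsetP sT y yT.
    rewrite /Wj !in_setD in_set1 in_cnbhd (negbTE yK) andbF /=.
    by case/andP => /norP[_ /nandP[/negP//|->]].
  + by rewrite cardsU1 jT (eqP cT) add1n prednK.
Qed.

Definition DD j j' (k : nat) (U : {set PS}) :=
  [&& U \subset V, [disjoint U & cnbhd b V j] && [disjoint U & cnbhd b V j'],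
      is_indep b U & (#|U| == k.-2) && (1 < k)%N].

Lemma condB (k : nat) j j' (jK : j \in Ks) (j'K : j' \in Ks) (njj : j != j') U :
  (IS (Wj j) k.-1 (j' |: U) && (j' \notin U)) = DD j j' k U.
Proof.
have j'V : j' \in V := subsetP hKsV j' j'K.
apply/idP/idP.
- case/andP => /and3P[sW iU cU] jU.
  have iUU : is_indep b U := indep_sub (subsetUr _ _) iU.
  have nf : forall y, y \in U -> ~~ fr j' y.
    by move=> y yT; apply: (elimT (is_indepP _) iU); rewrite ?setU11 ?setU1r.
  have yW : forall y, y \in U -> y \in Wj j.
    by move=> y yU; apply: (subsetP sW); rewrite setU1r.
  apply/and4P; split => //.
  + apply/subsetP => y /yW; rewrite /Wj in_setD => /andP[_ ->] //.
  + apply/andP; split; apply/disjP => y yU.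
    * have := yW y yU; rewrite /Wj !in_setD in_set1 => /andP[H _].
      apply: contra (nf y yU) => ycn.
      rewrite ycn andbT negbK in H; case/andP: H => _ yK.
      apply: (elimT (is_cliqueP _) hcl) => //.
      by apply: contraNneq jU => ->.
    * rewrite in_cnbhd negb_or (negbTE (nf y yU)) andbF andbT.
      by apply: contraNneq jU => <-.
  + rewrite cardsU1 jU add1n in cU.
    by case: k cU => [|[|k']] //= /eqP [->]; rewrite eqxx.
- case/and4P => sV /andP[d1 d2] iU /andP[cU k1].
  have jU : j' \notin U.
    by apply/negP => /(elimT (disjP U _) d2); rewrite in_cnbhd eqxx.
  rewrite jU andbT; apply/and3P; split.
  + apply/subsetP => y; rewrite in_setU1 => /orP[/eqP->|yU].
      rewrite /Wj !in_setD in_set1 j'K j'V eq_sym njj /=.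
      by [].
    have ycn : y \notin cnbhd b V j := elimT (disjP U _) d1 y yU.
    by rewrite /Wj !in_setD (negbTE ycn) andbF /= (subsetP sV).
  + apply: indepU1 => // y yU.
    have := elimT (disjP U _) d2 y yU.
    by rewrite in_cnbhd (subsetP sV y yU) /= negb_or => /andP[_ ->].
  + rewrite cardsU1 jU add1n (eqP cU).
    by case: k k1 {cU} => [|[|k']].
Qed.


End Thm.
End Main.

Section Main2.
Variable R : realType.
Variable n : nat.
Variable b : pauli_string n -> R.
Local Notation PS := (pauli_string n).
Local Notation h := (hterm b).
Local Notation fr := (frust b).
Variables (V Ks : {set PS}).
Hypotheses (hKsV : Ks \subset V) (hcl : is_clique b Ks).
Local Notation IS := (@IS R n b).
Local Notation Wj := (@Wj R n b V Ks).
Local Notation DD := (@DD R n b V).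

Lemma QE (W : {set PS}) (k : nat) :
  Qcharge b W k = \sum_(S | IS W k S) hprod b S.
Proof. by []. Qed.

Definition Gs k j j' := \sum_(U | DD j j' k U) hprod b U.
Definition Cp k j j' : 'M[complex R]_(2 ^ n) :=
  if j == j' then 0 else Gs k j j' *m (h j' *m h j).

Lemma andb_swap4 (a x y c d : bool) : [&& a, x && y, c & d] = [&& a, y && x, c & d].
Proof. by rewrite (andbC x). Qed.

Lemma andb_mv (a i c d : bool) : [&& a, i & c] && d = [&& a && d, i & c].
Proof. by case: a; case: i; case: c; case: d. Qed.

Lemma Gs_sym k j j' : Gs k j j' = Gs k j' j.
Proof.
rewrite /Gs.
have H : forall U, DD j j' k U = DD j' j k U by move=> U; exact: andb_swap4.
exact: (eq_bigl _ _ H).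
Qed.

Lemma Z0 k : \sum_(j in Ks) \sum_(j' in Ks) Cp k j j' = 0.
Proof.
set Z := (X in X = 0).
have : Z = - Z.
  rewrite {1}/Z exchange_big /= /Z -sumrN; apply: eq_bigr => x xK.
  rewrite -sumrN; apply: eq_bigr => y yK.
  rewrite /Cp; case: (eqVneq y x) => [_|ne]; first by rewrite oppr0.
  have ne' : x != y by rewrite eq_sym.
  have E := frust_anti (elimT (is_cliqueP _ _) hcl _ _ xK yK ne').
  by rewrite -mulmxN -E (Gs_sym k y x).
move=> HZ.
have : Z + Z = 0 by rewrite {1}HZ addNr.
rewrite -mulr2n -scaler_nat => /eqP; rewrite scaler_eq0 => /orP[|/eqP//].
by rewrite pnatr_eq0.
Qed.

Lemma perj (k : nat) (hk : (1 <= k)%N) j (jK : j \in Ks) :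
  Qcharge b (Wj j) k.-1 *m h j =
  \sum_(S | IS V k S && (j \in S)) hprod b S + \sum_(j' in Ks) Cp k j j'.
Proof.
rewrite (QE (Wj j) k.-1) (bigID (fun T : {set PS} => [disjoint T & Ks])) /= mulmxDl !mulmx_suml.
congr (_ + _).
  rewrite [in RHS](reindex1 j (IS V k) (hprod b)).
  apply: eq_big => T; first by rewrite (condA hKsV hcl hk jK).
  rewrite -(condA hKsV hcl hk jK) => /andP[/and3P[_ iU _] jT].
  by rewrite hprodU1.
rewrite (split_clique (Wj j) k.-1 (fun T => hprod b T *m h j) hcl).
apply: eq_bigr => j' j'K.
rewrite /Cp; case: (eqVneq j j') => [e|njj].
  apply: big_pred0 => T; apply/negbTE/andP => [[/and3P[sT _ _] jT]].
  rewrite -e in jT.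
  have := subsetP sT j jT.
  by rewrite /Wj !in_setD in_set1 in_cnbhd !eqxx.
rewrite (reindex1 j' (IS (Wj j) k.-1) (fun T => hprod b T *m h j)).
rewrite /Gs mulmx_suml; apply: eq_big => U.
  by rewrite (condB hKsV hcl k jK j'K njj).
move=> /andP[/and3P[_ iU _] jU].
by rewrite hprodU1 // mulmxA.
Qed.

Lemma main_thm (k : nat) (hk : (1 <= k)%N) :
  Qcharge b V k =
    Qcharge b (V :\: Ks) k +
    \sum_(j in Ks) Qcharge b (V :\: (cnbhd b V j :\: (Ks :\ j))) k.-1 *m h j.
Proof.
rewrite (QE V k) (bigID (fun S : {set PS} => [disjoint S & Ks])) /=.
have E1 : \sum_(S | IS V k S && [disjoint S & Ks]) hprod b S = Qcharge b (V :\: Ks) k.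
  rewrite QE; apply: eq_bigl => S; rewrite /IS subsetD.
  exact: andb_mv.
rewrite E1; congr (_ + _).
rewrite (split_clique V k (hprod b) hcl).
rewrite (eq_bigr _ (fun j jK => perj hk jK)) big_split /= Z0 addr0.
by [].
Qed.

End Main2.

Unset Implicit Arguments.

Theorem lemma18 (R : realType) (n : nat) (V : {set pauli_string n})
  (b : pauli_string n -> R)
  (hb : forall j, j \in V -> b j != 0)
  (Ks : {set pauli_string n})
  (hKs : simplicial_clique b V Ks)
  (k : nat) (hk : (1 <= k)%N) :
  Qcharge b V k =
    Qcharge b (V :\: Ks) k +
    \sum_(j in Ks)
      Qcharge b (V :\: (cnbhd b V j :\: (Ks :\ j))) k.-1 *m hterm b j.
Proof.
case/and3P: hKs => hKsV hcl _.
exact: (main_thm hKsV hcl hk).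
Qed.
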